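(* Let $\Sigma_A=\{\tau_{1,1},\dots,\tau_{1,a},\alpha_1,\dots,\alpha_p\}$ and $\Sigma_B=\{\tau_{2,1},\dots,\tau_{2,b},\beta_1,\dots,\beta_q\}$ be finite alphabets, and let $\mathcal{L}_A\subseteq\Sigma_A^*$ and $\mathcal{L}_B\subseteq\Sigma_B^*$ be regular languages. Then their Segre product $\mathcal{L}_A\boxtimes\mathcal{L}_B$ is a regular language.
   Context: The alphabets are disjoint and each is partitioned into the ''$\tau$-letters'' ($\tau_{1,1},\dots,\tau_{1,a}$, resp. $\tau_{2,1},\dots,\tau_{2,b}$) and the remaining letters ($\alpha_1,\dots,\alpha_p$, resp. $\beta_1,\dots,\beta_q$). Every word in $\Sigma_A^*$ can be uniquely written as $u_1\alpha_{i_1}u_2\alpha_{i_2}\cdots u_d\alpha_{i_d}u_{d+1}$ with $d\ge 0$, $i_1,\dots,i_d\in[p]$, and each $u_k$ a (possibly empty) word in the letters $\tau_{1,1},\dots,\tau_{1,a}$; similarly every word in $\Sigma_B^*$ is uniquely $v_1\beta_{j_1}\cdots v_d\beta_{j_d}v_{d+1}$ with the $v_k$ words in $\tau_{2,1},\dots,\tau_{2,b}$. The Segre product $\mathcal{L}_A\boxtimes\mathcal{L}_B$ is the language on the alphabet $\{\tau_{1,1},\dots,\tau_{1,a},\tau_{2,1},\dots,\tau_{2,b}\}\cup\{\gamma_{i,j}: i\in[p], j\in[q]\}$ (with $pq+a+b$ letters) consisting of all words $u_1v_1\gamma_{i_1,j_1}u_2v_2\gamma_{i_2,j_2}\cdots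 u_dv_d\gamma_{i_d,j_d}u_{d+1}v_{d+1}$ such that $u_1\alpha_{i_1}u_2\alpha_{i_2}\cdots u_d\alpha_{i_d}u_{d+1}\in\mathcal{L}_A$ and $v_1\beta_{j_1}v_2\beta_{j_2}\cdots v_d\beta_{j_d}v_{d+1}\in\mathcal{L}_B$ (with the same $d$). Regular languages are those in the smallest class containing the languages consisting of a single letter or of the empty word, closed under union, concatenation and Kleene star (equivalently, those recognized by a finite automaton). *)

(* Defs.v *)
From mathcomp Require Import all_boot.
Set Implicit Arguments. Unset Strict Implicit. Unset Printing Implicit Defensive.

Definition language (T : Type) := seq T -> Prop.

Inductive regex (T : Type) : Type :=
| RVoid
| REps
| RLit of T
| RAlt of regex T & regex T
| RCat of regex T & regex T
| RStar of regex T.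

Arguments RVoid {T}. Arguments REps {T}.

Fixpoint rlang (T : Type) (r : regex T) : language T :=
  match r with
  | RVoid => fun _ => False
  | REps => fun w => w = [::]
  | RLit x => fun w => w = [:: x]
  | RAlt r1 r2 => fun w => rlang r1 w \/ rlang r2 w
  | RCat r1 r2 => fun w => exists w1 w2, w = w1 ++ w2 /\ rlang r1 w1 /\ rlang r2 w2
  | RStar r1 => fun w => exists ws : seq (seq T),
        w = flatten ws /\ (forall k, k < size ws -> rlang r1 (nth [::] ws k))
  end.

Definition regular (T : Type) (L : language T) : Prop :=
  exists r : regex T, forall w, L w <-> rlang r w.

(* Alphabets:  Sigma_A = {tau_{1,1..a}} + {alpha_{1..p}},
               Sigma_B = {tau_{2,1..b}} + {beta_{1..q}},
   Segre alphabet = ({tau_{1,.}} + {tau_{2,.}}) + {gamma_{i,j}}. *)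
Definition SigmaA (a p : nat) := ('I_a + 'I_p)%type.
Definition SigmaB (b q : nat) := ('I_b + 'I_q)%type.
Definition SigmaS (a b p q : nat) := (('I_a + 'I_b) + ('I_p * 'I_q))%type.

Section Segre.
Variables (a b p q : nat).

Definition tauA (x : 'I_a) : SigmaA a p := inl x.
Definition alphaA (i : 'I_p) : SigmaA a p := inr i.
Definition tauB (y : 'I_b) : SigmaB b q := inl y.
Definition betaB (j : 'I_q) : SigmaB b q := inr j.
Definition tau1S (x : 'I_a) : SigmaS a b p q := inl (inl x).
Definition tau2S (y : 'I_b) : SigmaS a b p q := inl (inr y).
Definition gammaS (ij : 'I_p * 'I_q) : SigmaS a b p q := inr ij.

(* Segre product: all words u_1 v_1 gamma_{i1,j1} ... u_d v_d gamma_{id,jd}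
   u_{d+1} v_{d+1} with u_1 alpha_{i1} ... u_{d+1} in L_A and
   v_1 beta_{j1} ... v_{d+1} in L_B.  The first d blocks are given by the
   lists us, vs, ijs (all of length d), the last by ul, vl. *)
Definition segre (LA : language (SigmaA a p)) (LB : language (SigmaB b q))
  : language (SigmaS a b p q) :=
  fun w => exists (us : seq (seq 'I_a)) (vs : seq (seq 'I_b))
                  (ijs : seq ('I_p * 'I_q)) (ul : seq 'I_a) (vl : seq 'I_b),
    [/\ size us = size ijs, size vs = size ijs,
        w = flatten [seq map tau1S t.1.1 ++ map tau2S t.1.2 ++ [:: gammaS t.2]
                    | t <- zip (zip us vs) ijs] ++ map tau1S ul ++ map tau2S vl,
        LA (flatten [seq map tauA t.1 ++ [:: alphaA t.2.1] | t <- zip us ijs]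
              ++ map tauA ul)
      & LB (flatten [seq map tauB t.1 ++ [:: betaB t.2.2] | t <- zip vs ijs]
              ++ map tauB vl)].

End Segre.

(* Main.v *)
Require Import Defs.
From HB Require Import structures.
From mathcomp Require Import all_boot.
Set Implicit Arguments. Unset Strict Implicit. Unset Printing Implicit Defensive.

Section Star.
Variable T : eqType.
Implicit Types (P : seq T -> Prop) (w u v : seq T).

Definition star P w := exists ws : seq (seq T), w = flatten ws /\ forall x, x \in ws -> P x.

Lemma star_nil P : star P [::].
Proof. by exists [::]. Qed.

Lemma star_cat P u v : P u -> star P v -> star P (u ++ v).
Proof.
move=> Pu [ws [-> Hws]]; exists (u :: ws); split => // x.
by rewrite inE => /orP [/eqP -> //|]; apply: Hws.
Qed.

Lemma star_app P u v : star P u -> star P v -> star P (u ++ v).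
Proof.
move=> [ws1 [-> H1]] [ws2 [-> H2]]; exists (ws1 ++ ws2); split; first by rewrite flatten_cat.
by move=> x; rewrite mem_cat => /orP [/H1|/H2].
Qed.

Lemma star_ext P P' w : (forall x, P x -> P' x) -> star P w -> star P' w.
Proof. by move=> H [ws [-> Hws]]; exists ws; split => // x /Hws /H. Qed.

Lemma star_cons P c w : star P (c :: w) ->
  exists x rest, [/\ w = x ++ rest, P (c :: x) & star P rest].
Proof.
move=> [ws [Ew Hws]]; elim: ws Ew Hws => [//|y ws IH] /= Ew Hws.
case: y Ew Hws => [|d y] /= Ew Hws.
  apply: IH => // x xin; apply: Hws; by rewrite inE xin orbT.
case: Ew => -> ->; exists y, (flatten ws); split => //.
  by apply: Hws; rewrite inE eqxx.
exists ws; split => // x xin; apply: Hws; by rewrite inE xin orbT.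
Qed.

Lemma rlang_star (r : regex T) w : rlang (RStar r) w <-> star (rlang r) w.
Proof.
split.
  move=> [ws [-> H]]; exists ws; split => // x xin.
  rewrite -(nth_index [::] xin); apply: H; by rewrite index_mem.
move=> [ws [-> H]]; exists ws; split => // k kl; apply: H; exact: mem_nth.
Qed.
End Star.

Definition ralts T (l : seq (regex T)) := foldr (@RAlt T) RVoid l.

Lemma ralts_map T (I : eqType) (f : I -> regex T) (l : seq I) w :
  rlang (ralts (map f l)) w <-> exists2 i, i \in l & rlang (f i) w.
Proof.
elim: l => [|i l [IH1 IH2]] /=; first by split => // [[]].
split.
  case=> [H|/IH1 [j jl H]]; first by exists i; rewrite ?inE ?eqxx.
  by exists j => //; rewrite inE jl orbT.
case=> j; rewrite inE => /orP [/eqP ->|jl] H; first by left.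
by right; apply: IH2; exists j.
Qed.

Record nfa (T : Type) := NFA {
  st : finType; ini : pred st; del : st -> T -> st -> bool; fin : pred st }.

Fixpoint acc T (N : nfa T) (s : st N) (w : seq T) : Prop :=
  match w with [::] => fin s | c :: w' => exists s', del s c s' /\ acc s' w' end.

Definition Lang T (N : nfa T) (w : seq T) := exists s : st N, ini s /\ acc s w.

Section Kleene.
Variables (T : finType) (N : nfa T).
Notation Q := (st N).

Fixpoint rin (X : seq Q) (q : Q) (w : seq T) (q' : Q) : Prop :=
  match w with
  | [::] => False
  | c :: w' => (w' = [::] /\ del q c q') \/
               exists m, [/\ del q c m, m \in X & rin X m w' q']
  end.

Definition Rletters (q q' : Q) : regex T :=
  ralts (map (fun c => if del q c q' then RLit c else RVoid) (enum T)).

Fixpoint R (X : seq Q) (q q' : Q) : regex T :=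
  match X with
  | [::] => Rletters q q'
  | k :: X' => RAlt (R X' q q') (RCat (R X' q k) (RCat (RStar (R X' k k)) (R X' k q')))
  end.

Lemma rin0 q w q' : rin [::] q w q' <-> exists c, w = [:: c] /\ del q c q'.
Proof.
case: w => [|c w] /=; first by split => // [[c []]].
split; first by case=> [[-> H]|[m []]] //; exists c.
by case=> d [[-> ->] H]; left.
Qed.

Lemma rin_mono X k q w q' : rin X q w q' -> rin (k :: X) q w q'.
Proof.
elim: w q => [|c w IH] q //= [H|[m [H1 H2 H3]]]; first by left.
by right; exists m; split => //; [rewrite inE H2 orbT | apply: IH].
Qed.

Lemma rin_cat Y q u m v q' : rin Y q u m -> m \in Y -> rin Y m v q' -> rin Y q (u ++ v) q'.
Proof.
elim: u q => [|c u IH] q //= [[-> H]|[m' [H1 H2 H3]]] mY Hv.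
  by right; exists m.
by right; exists m'; split => //; apply: IH.
Qed.

Lemma rin_star Y k ws w3 q' : (forall x, x \in ws -> rin Y k x k) -> k \in Y ->
  rin Y k w3 q' -> rin Y k (flatten ws ++ w3) q'.
Proof.
elim: ws => [|x ws IH] //= Hws kY H3.
rewrite -catA; apply: (rin_cat (m := k)) => //; first by apply: Hws; rewrite inE eqxx.
by apply: IH => // y yin; apply: Hws; rewrite inE yin orbT.
Qed.

Lemma rin_split X k q w q' : rin (k :: X) q w q' -> rin X q w q' \/
  exists w1 w2 w3, [/\ w = w1 ++ w2 ++ w3, rin X q w1 k,
                       star (fun x => rin X k x k) w2 & rin X k w3 q'].
Proof.
elim: w q => [|c w IH] q //= [H|[m [H1 H2 H3]]]; first by left; left.
have [IHa|[w1 [w2 [w3 [Ew R1 S2 R3]]]]] := IH _ H3.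
  case: (boolP (m \in X)) => mX; first by left; right; exists m.
  move: H2; rewrite inE (negbTE mX) orbF => /eqP Em; subst m.
  right; exists [:: c], [::], w; split => //; [by left | exact: star_nil].
case: (boolP (m \in X)) => mX.
  right; exists (c :: w1), w2, w3; split => //; [by rewrite Ew | by right; exists m].
move: H2; rewrite inE (negbTE mX) orbF => /eqP Em; subst m.
right; exists [:: c], (w1 ++ w2), w3; split => //; first by rewrite Ew catA.
  by left.
exact: star_cat.
Qed.

Lemma R_correct X q q' w : rlang (R X q q') w <-> rin X q w q'.
Proof.
elim: X q q' w => [|k X IH] q q' w /=.
  split.
    by move/ralts_map => [c _]; case: ifP => // H ->; apply/rin0; exists c.
  by move/rin0 => [c [-> H]]; apply/ralts_map; exists c; rewrite ?mem_enum // H.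
split.
  case=> [/IH|[w1 [w23 [-> [/IH R1 [w2 [w3 [-> [/rlang_star S2 /IH R3]]]]]]]]].
    exact: rin_mono.
  apply: (rin_cat (m := k)); [exact: rin_mono | by rewrite inE eqxx |].
  case: S2 => ws [-> Hws]; apply: rin_star; [| by rewrite inE eqxx | exact: rin_mono].
  by move=> x /Hws /IH /rin_mono.
case/rin_split => [/IH|[w1 [w2 [w3 [-> R1 S2 R3]]]]]; first by left.
right; exists w1, (w2 ++ w3); split => //; split; first exact/IH.
exists w2, w3; split => //; split; last exact/IH.
apply/rlang_star; apply: star_ext S2 => x /IH; done.
Qed.

Lemma acc_rin q w : acc q w <-> (w = [::] /\ fin q) \/ exists f, fin f /\ rin (enum Q) q w f.
Proof.
elim: w q => [|c w IH] q /=.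
  by split; [left | case=> [[]|[f []]]].
split.
  case=> s [Hd /(IH s) [[-> Hf]|[f [Hf Hr]]]]; right.
    by exists s; split => //; left.
  by exists f; split => //; right; exists s; rewrite mem_enum.
case=> [[]//|[f [Hf [[-> Hd]|[m [Hd _ Hr]]]]]].
  by exists f; split => //; apply/(IH f); left.
by exists m; split => //; apply/(IH m); right; exists f.
Qed.

Definition nfa_re : regex T :=
  RAlt (if [exists s : Q, ini s && fin s] then REps else RVoid)
       (ralts (map (fun s : Q => ralts (map (fun f : Q => if ini s && fin f then R (enum Q) s f else RVoid)
                                        (enum Q))) (enum Q))).

Lemma nfa_re_correct w : Lang N w <-> rlang nfa_re w.
Proof.
split.
  case=> s [Hi /acc_rin [[-> Hf]|[f [Hf Hr]]]].
    by left; have -> : [exists s0 : Q, ini s0 && fin s0] by apply/existsP; exists s; rewrite Hi Hf.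
  right; apply/ralts_map; exists s; rewrite ?mem_enum //.
  apply/ralts_map; exists f; rewrite ?mem_enum // Hi Hf; exact/R_correct.
case=> [|/ralts_map [s _ /ralts_map [f _]]].
  case: ifP => // /existsP [s /andP [Hi Hf]] /= ->; exists s; split => //.
case: ifP => // /andP [Hi Hf] /R_correct Hr; exists s; split => //.
by apply/acc_rin; right; exists f.
Qed.

End Kleene.

Lemma nfa_regular (T : finType) (N : nfa T) : exists r : regex T, forall w, Lang N w <-> rlang r w.
Proof. exists (nfa_re N) => w; exact: nfa_re_correct. Qed.

Section Constr.
Variable T : finType.
Implicit Types (w u v : seq T).

Definition nfa_void : nfa T := @NFA T unit (fun _ => false) (fun _ _ _ => false) (fun _ => false).
Lemma nfa_void_ok w : Lang nfa_void w <-> rlang RVoid w.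
Proof. by split => // [[s []]]. Qed.

Definition nfa_eps : nfa T := @NFA T unit (fun _ => true) (fun _ _ _ => false) (fun _ => true).
Lemma nfa_eps_ok w : Lang nfa_eps w <-> rlang REps w.
Proof.
case: w => [|c w] /=; first by split => // _; exists tt.
by split => // [[s [_ [s' []]]]].
Qed.

Definition nfa_lit (c : T) : nfa T :=
  @NFA T bool negb (fun s x s' => ~~ s && s' && (x == c)) id.
Lemma nfa_lit_ok c w : Lang (nfa_lit c) w <-> rlang (RLit c) w.
Proof.
split.
  case=> [[]] [//= _]; case: w => [|d w] //= [s' [H Ha]]; move: H.
  case: s' Ha => Ha; last by case/andP.
  move=> /= /eqP ->; case: w Ha => [//|e w] /= [s' [H _]].
  by move: H.
move=> -> /=; exists false; split => //; exists true; by rewrite /= eqxx.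
Qed.

Section Two.
Variables N1 N2 : nfa T.

Definition nfa_alt : nfa T :=
  @NFA T (Finite.clone (st N1 + st N2)%type _)
    (fun s => match s with inl s => ini s | inr s => ini s end)
    (fun s c s' => match s, s' with inl s, inl s' => del s c s'
                     | inr s, inr s' => del s c s' | _, _ => false end)
    (fun s => match s with inl s => fin s | inr s => fin s end).

Lemma acc_alt_l (s : st N1) w : @acc _ nfa_alt (inl s) w <-> acc s w.
Proof.
elim: w s => [|c w IH] s //=; split.
  case=> [[s'|s']] [H Ha]; last by move: H.
  by exists s'; split => //; apply/(IH s').
by case=> s' [H Ha]; exists (inl s'); split => //; apply/(IH s').
Qed.
Lemma acc_alt_r (s : st N2) w : @acc _ nfa_alt (inr s) w <-> acc s w.
Proof.
elim: w s => [|c w IH] s //=; split.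
  case=> [[s'|s']] [H Ha]; first by move: H.
  by exists s'; split => //; apply/(IH s').
by case=> s' [H Ha]; exists (inr s'); split => //; apply/(IH s').
Qed.

Lemma nfa_alt_ok w : Lang nfa_alt w <-> Lang N1 w \/ Lang N2 w.
Proof.
split.
  case=> [[s|s]] [/= Hi]; [move/acc_alt_l | move/acc_alt_r] => H; [left|right]; by exists s.
case=> [[s [Hi /acc_alt_l H]]|[s [Hi /acc_alt_r H]]]; by [exists (inl s) | exists (inr s)].
Qed.

Definition nfa_cat : nfa T :=
  @NFA T (Finite.clone (st N1 + st N2)%type _)
    (fun s => match s with inl s => ini s | inr s => false end)
    (fun s c s' => match s, s' with
                   | inl s, inl s' => del s c s'
                   | inl s, inr s' => fin s && [exists s0 : st N2, ini s0 && del s0 c s']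
                   | inr s, inr s' => del s c s'
                   | _, _ => false end)
    (fun s => match s with inl s => fin s && [exists s0 : st N2, ini s0 && fin s0]
                         | inr s => fin s end).

Lemma acc_cat_r (s : st N2) w : @acc _ nfa_cat (inr s) w <-> acc s w.
Proof.
elim: w s => [|c w IH] s //=; split.
  case=> [[s'|s']] [H Ha]; first by move: H.
  by exists s'; split => //; apply/(IH s').
by case=> s' [H Ha]; exists (inr s'); split => //; apply/(IH s').
Qed.

Lemma acc_cat_l (s : st N1) w : @acc _ nfa_cat (inl s) w <->
  exists u v, [/\ w = u ++ v, acc s u & Lang N2 v].
Proof.
elim: w s => [|c w IH] s /=.
  split.
    case/andP => Hf /existsP [s0 /andP [Hi Hf0]].
    by exists [::], [::]; split => //; exists s0.
  case=> u [v [Ew Hu [s0 [Hi Hf0]]]]; move: Ew Hu Hf0; case: u => [|d u] //; case: v => [|e v] // _ /= Hf Hf0.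
  by rewrite Hf /=; apply/existsP; exists s0; rewrite Hi Hf0.
split.
  case=> [[s'|s']] /= [H].
    by case/(IH s') => u [v [-> Hu Hv]]; exists (c :: u), v; split => //; exists s'.
  case/andP: H => Hf /existsP [s0 /andP [Hi Hd]] /acc_cat_r Ha.
  exists [::], (c :: w); split => //; exists s0; split => //; by exists s'.
case=> u [v [Ew Hu Hv]]; case: u Ew Hu => [|d u] /= Ew Hu.
  subst v; case: Hv => s0 [Hi [s' [Hd Ha]]].
  exists (inr s'); split; last exact/acc_cat_r.
  by rewrite /= Hu; apply/existsP; exists s0; rewrite Hi.
case: Ew => -> Ew; case: Hu => s' [Hd Hu]; exists (inl s'); split => //.
by apply/(IH s'); exists u, v.
Qed.

Lemma nfa_cat_ok w : Lang nfa_cat w <-> exists u v, [/\ w = u ++ v, Lang N1 u & Lang N2 v].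
Proof.
split.
  case=> [[s|s]] [//= Hi] /acc_cat_l [u [v [-> Hu Hv]]].
  by exists u, v; split => //; exists s.
case=> u [v [-> [s [Hi Hu]] Hv]]; exists (inl s); split => //.
by apply/acc_cat_l; exists u, v.
Qed.
End Two.

Section Star1.
Variable N : nfa T.

Definition nfa_star : nfa T :=
  @NFA T (Finite.clone (option (st N)) _)
    (fun s => s == None)
    (fun s c s' => match s, s' with
                   | None, Some s' => [exists s0 : st N, ini s0 && del s0 c s']
                   | Some s, Some s' => del s c s' || (fin s && [exists s0 : st N, ini s0 && del s0 c s'])
                   | _, None => false end)
    (fun s => match s with None => true | Some s => fin s end).

Lemma acc_star_some (s : st N) w : @acc _ nfa_star (Some s) w <->
  exists u v, [/\ w = u ++ v, acc s u & star (Lang N) v].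
Proof.
elim: w s => [|c w IH] s /=.
  split; first by move=> Hf; exists [::], [::]; split => //; exact: star_nil.
  by case=> u [v [Ew Hu _]]; move: Ew Hu; case: u => [|d u] //; case: v => [|e v].
split.
  case=> [[s'|]] [H Ha]; last by move: H.
  case/(IH s'): Ha => u [v [-> Hu Hv]].
  case/orP: H => [Hd|/andP [Hf /existsP [s0 /andP [Hi Hd]]]].
    by exists (c :: u), v; split => //; exists s'.
  exists [::], (c :: u ++ v); split => //.
  rewrite -cat_cons; apply: star_cat => //; exists s0; split => //; by exists s'.
case=> u [v [Ew Hu Hv]]; case: u Ew Hu => [|d u] /= Ew Hu.
  subst v; case/star_cons: Hv => x [rest [Ew [s0 [Hi [s' [Hd Hx]]]] Hr]].
  exists (Some s'); split; last by apply/(IH s'); exists x, rest; split.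
  by apply/orP; right; apply/andP; split => //; apply/existsP; exists s0; rewrite Hi.
case: Ew => -> Ew; case: Hu => s' [Hd Hu]; exists (Some s'); split; first by rewrite /= Hd.
by apply/(IH s'); exists u, v.
Qed.

Lemma acc_star_none w : @acc _ nfa_star None w <-> star (Lang N) w.
Proof.
case: w => [|c w] /=; first by split => // _; exact: star_nil.
split.
  case=> [[s'|]] [H Ha]; last by move: H.
  case/acc_star_some: Ha => u [v [-> Hu Hv]].
  case/existsP: H => s0 /andP [Hi Hd].
  rewrite -cat_cons; apply: star_cat => //; exists s0; split => //; by exists s'.
case/star_cons => x [rest [-> [s0 [Hi [s' [Hd Hx]]]] Hr]].
exists (Some s'); split; first by apply/existsP; exists s0; rewrite Hi.
by apply/acc_star_some; exists x, rest.
Qed.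

Lemma nfa_star_ok w : Lang nfa_star w <-> star (Lang N) w.
Proof.
split; first by case=> s [/eqP -> /acc_star_none].
by move/acc_star_none => H; exists None.
Qed.
End Star1.

Lemma regex_nfa (r : regex T) : exists N : nfa T, forall w, Lang N w <-> rlang r w.
Proof.
elim: r => [|| c | r1 [N1 H1] r2 [N2 H2] | r1 [N1 H1] r2 [N2 H2] | r1 [N1 H1]].
- by exists nfa_void; exact: nfa_void_ok.
- by exists nfa_eps; exact: nfa_eps_ok.
- by exists (nfa_lit c); exact: nfa_lit_ok.
- exists (nfa_alt N1 N2) => w; rewrite /=; split.
    by case/nfa_alt_ok => [/H1|/H2]; [left|right].
  by case=> [/H1|/H2] H; apply/nfa_alt_ok; [left|right].
- exists (nfa_cat N1 N2) => w /=; split.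
    by case/nfa_cat_ok => u [v [-> /H1 Hu /H2 Hv]]; exists u, v.
  by case=> u [v [-> [/H1 Hu /H2 Hv]]]; apply/nfa_cat_ok; exists u, v.
- exists (nfa_star N1) => w; split.
    by move/nfa_star_ok => H; apply/rlang_star; apply: star_ext H => x /H1.
  by move/rlang_star => H; apply/nfa_star_ok; apply: star_ext H => x /H1.
Qed.
End Constr.

Definition nfa_inter (T : Type) (N1 N2 : nfa T) : nfa T :=
  @NFA T (Finite.clone (st N1 * st N2)%type _)
   (fun s => ini s.1 && ini s.2) (fun s c s' => del s.1 c s'.1 && del s.2 c s'.2)
   (fun s => fin s.1 && fin s.2).

Lemma acc_inter T (N1 N2 : nfa T) (s1 : st N1) (s2 : st N2) w :
  @acc _ (nfa_inter N1 N2) (s1, s2) w <-> acc s1 w /\ acc s2 w.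
Proof.
elim: w s1 s2 => [|c w IH] s1 s2 /=; first by split => [/andP|[-> ->]].
split.
  case=> [[t1 t2]] [/andP [H1 H2] /(IH t1 t2) [A1 A2]].
  by split; [exists t1 | exists t2].
case=> [[t1 [H1 A1]] [t2 [H2 A2]]]; exists (t1, t2); split; first by rewrite /= H1 H2.
exact/(IH t1 t2).
Qed.

Lemma Lang_inter T (N1 N2 : nfa T) w : Lang (nfa_inter N1 N2) w <-> Lang N1 w /\ Lang N2 w.
Proof.
split.
  by case=> [[s1 s2]] [/andP [H1 H2] /acc_inter [A1 A2]]; split; [exists s1 | exists s2].
case=> [[s1 [H1 A1]] [s2 [H2 A2]]]; exists (s1, s2); split; first by rewrite /= H1 H2.
exact/acc_inter.
Qed.

Definition nfa_inv (T U : Type) (N : nfa T) (h : U -> option T) : nfa U :=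
  @NFA U (st N) (@ini _ N)
    (fun s c s' => match h c with Some x => del s x s' | None => s == s' end) (@fin _ N).

Lemma acc_inv T U (N : nfa T) (h : U -> option T) (s : st N) w :
  @acc _ (nfa_inv N h) s w <-> acc s (pmap h w).
Proof.
elim: w s => [|c w IH] s //=.
case E: (h c) => [x|] /=.
  split; first by case=> s' [H /(IH s') A]; exists s'.
  by case=> s' [H /(IH s') A]; exists s'.
split; first by case=> s' [/eqP <- /(IH s)].
by move/(IH s) => A; exists s; split.
Qed.

Lemma Lang_inv T U (N : nfa T) (h : U -> option T) w :
  Lang (nfa_inv N h) w <-> Lang N (pmap h w).
Proof.
split; first by case=> s [H /acc_inv A]; exists s.
by case=> s [H /acc_inv A]; exists s.
Qed.

HB.instance Definition _ a b p q :=
  Finite.copy (SigmaS a b p q) (('I_a + 'I_b) + ('I_p * 'I_q))%type.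
HB.instance Definition _ a p := Finite.copy (SigmaA a p) ('I_a + 'I_p)%type.
HB.instance Definition _ b q := Finite.copy (SigmaB b q) ('I_b + 'I_q)%type.

Section Segre2.
Variables a b p q : nat.
Notation SS := (SigmaS a b p q).

Definition piA (c : SS) : option (SigmaA a p) :=
  match c with inl (inl x) => Some (inl x) | inl (inr _) => None | inr ij => Some (inr ij.1) end.
Definition piB (c : SS) : option (SigmaB b q) :=
  match c with inl (inl _) => None | inl (inr y) => Some (inl y) | inr ij => Some (inr ij.2) end.

Definition F (us : seq (seq 'I_a)) (vs : seq (seq 'I_b)) (ijs : seq ('I_p * 'I_q)) : seq SS :=
  flatten [seq map (@tau1S a b p q) t.1.1 ++ map (@tau2S a b p q) t.1.2 ++ [:: gammaS a b t.2]
          | t <- zip (zip us vs) ijs].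

Lemma pA1 u : pmap piA (map (@tau1S a b p q) u) = map (@tauA a p) u.
Proof. by elim: u => //= x u ->. Qed.
Lemma pA2 v : pmap piA (map (@tau2S a b p q) v) = [::].
Proof. by elim: v. Qed.
Lemma pB1 u : pmap piB (map (@tau1S a b p q) u) = [::].
Proof. by elim: u. Qed.
Lemma pB2 v : pmap piB (map (@tau2S a b p q) v) = map (@tauB b q) v.
Proof. by elim: v => //= x v ->. Qed.

Lemma pmapA_segre us vs ijs ul vl : size us = size ijs -> size vs = size ijs ->
  pmap piA (F us vs ijs ++ map (@tau1S a b p q) ul ++ map (@tau2S a b p q) vl) =
  flatten [seq map (@tauA a p) t.1 ++ [:: alphaA a t.2.1] | t <- zip us ijs] ++ map (@tauA a p) ul.
Proof.
move=> H1 H2; rewrite !pmap_cat pA1 pA2 cats0; congr (_ ++ _).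
elim: ijs us vs H1 H2 => [|ij ijs IH] [|u us] [|v vs] //= [H1] [H2].
by rewrite !pmap_cat pA1 pA2 /= IH.
Qed.

Lemma pmapB_segre us vs ijs ul vl : size us = size ijs -> size vs = size ijs ->
  pmap piB (F us vs ijs ++ map (@tau1S a b p q) ul ++ map (@tau2S a b p q) vl) =
  flatten [seq map (@tauB b q) t.1 ++ [:: betaB b t.2.2] | t <- zip vs ijs] ++ map (@tauB b q) vl.
Proof.
move=> H1 H2; rewrite !pmap_cat pB1 pB2; congr (_ ++ _).
elim: ijs us vs H1 H2 => [|ij ijs IH] [|u us] [|v vs] //= [H1] [H2].
by rewrite !pmap_cat pB1 pB2 /= IH.
Qed.

End Segre2.

Definition lits (T : Type) (I : finType) (f : I -> T) : regex T :=
  ralts (map (fun x => RLit (f x)) (enum I)).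

Lemma lits_ok (T : Type) (I : finType) (f : I -> T) w :
  rlang (lits f) w <-> exists x, w = [:: f x].
Proof.
split; first by case/ralts_map => x _ ->; exists x.
by case=> x ->; apply/ralts_map; exists x; rewrite ?mem_enum.
Qed.

Lemma star_letters (T : eqType) (I : Type) (f : I -> T) w :
  star (fun x => exists c, x = [:: f c]) w <-> exists u, w = map f u.
Proof.
split.
  case=> ws [Ew H]; subst w; elim: ws H => [|y ws IH] H; first by exists [::].
  have [c ->] := H y (mem_head _ _).
  case: IH => [x xin|u Eu]; first by apply: H; rewrite inE xin orbT.
  by exists (c :: u); rewrite /= Eu.
case=> u ->; elim: u => [|c u IH]; first exact: star_nil.
have -> : map f (c :: u) = [:: f c] ++ map f u by [].
by apply: star_cat => //; exists c.
Qed.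

Lemma starlits_ok (T : eqType) (I : finType) (f : I -> T) w :
  rlang (RStar (lits f)) w <-> exists u, w = map f u.
Proof.
split.
  by move/rlang_star => H; apply/star_letters; apply: star_ext H => x /lits_ok.
by move/star_letters => H; apply/rlang_star; apply: star_ext H => x /lits_ok.
Qed.

Section Shape.
Variables a b p q : nat.
Notation SS := (SigmaS a b p q).

Definition T1 : regex SS := RStar (lits (@tau1S a b p q)).
Definition T2 : regex SS := RStar (lits (@tau2S a b p q)).
Definition piece_re : regex SS := RCat T1 (RCat T2 (lits (@gammaS a b p q))).
Definition shape_re : regex SS := RCat (RStar piece_re) (RCat T1 T2).

Definition Piece (x : seq SS) := exists u v ij,
  x = map (@tau1S a b p q) u ++ map (@tau2S a b p q) v ++ [:: gammaS a b ij].

Lemma piece_ok x : rlang piece_re x <-> Piece x.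
Proof.
split.
  case=> w1 [w23 [-> [/starlits_ok [u ->] [w2 [w3 [-> [/starlits_ok [v ->] /lits_ok [ij ->]]]]]]]].
  by exists u, v, ij.
case=> u [v [ij ->]]; exists (map (@tau1S a b p q) u), (map (@tau2S a b p q) v ++ [:: gammaS a b ij]).
split => //; split; first by apply/starlits_ok; exists u.
exists (map (@tau2S a b p q) v), [:: gammaS a b ij]; split => //; split.
  by apply/starlits_ok; exists v.
by apply/lits_ok; exists ij.
Qed.

Lemma star_pieces w : star Piece w <->
  exists us vs ijs, [/\ size us = size ijs, size vs = size ijs & w = F us vs ijs].
Proof.
split.
  case=> ws [Ew H]; subst w; elim: ws H => [|y ws IH] H; first by exists [::], [::], [::].
  have [u [v [ij ->]]] := H y (mem_head _ _).
  case: IH => [x xin|us [vs [ijs [H1 H2 Eu]]]]; first by apply: H; rewrite inE xin orbT.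
  exists (u :: us), (v :: vs), (ij :: ijs); split => /=; [by rewrite H1 | by rewrite H2 | by rewrite Eu].
case=> us [vs [ijs [H1 H2 ->]]].
elim: ijs us vs H1 H2 => [|ij ijs IH] [|u us] [|v vs] // H1 H2; first exact: star_nil.
case: H1 => H1; case: H2 => H2.
have -> : F (u :: us) (v :: vs) (ij :: ijs) =
  (map (@tau1S a b p q) u ++ map (@tau2S a b p q) v ++ [:: gammaS a b ij]) ++ F us vs ijs by [].
by apply: star_cat; [exists u, v, ij | exact: IH].
Qed.

Lemma shape_ok w : rlang shape_re w <->
  exists us vs ijs ul vl, [/\ size us = size ijs, size vs = size ijs &
     w = F us vs ijs ++ map (@tau1S a b p q) ul ++ map (@tau2S a b p q) vl].
Proof.
split.
  case=> w1 [w23 [-> [H0 [w2 [w3 [-> [/starlits_ok [ul ->] /starlits_ok [vl ->]]]]]]]].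
  have H : star (rlang piece_re) w1 by apply/rlang_star.
  have /star_pieces [us [vs [ijs [H1 H2 ->]]]] : star Piece w1 by apply: star_ext H => x /piece_ok.
  by exists us, vs, ijs, ul, vl.
case=> us [vs [ijs [ul [vl [H1 H2 ->]]]]].
exists (F us vs ijs), (map (@tau1S a b p q) ul ++ map (@tau2S a b p q) vl); split => //; split.
  apply/rlang_star; apply: (@star_ext _ Piece); first by move=> x /piece_ok.
  by apply/star_pieces; exists us, vs, ijs.
exists (map (@tau1S a b p q) ul), (map (@tau2S a b p q) vl); split => //; split.
  by apply/starlits_ok; exists ul.
by apply/starlits_ok; exists vl.
Qed.
End Shape.

Theorem theorem3p3 (a b p q : nat)
    (LA : language (SigmaA a p)) (LB : language (SigmaB b q)) :
  regular LA -> regular LB -> regular (segre LA LB).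
Proof.
move=> [rA HA] [rB HB].
have [NA HNA] := regex_nfa rA.
have [NB HNB] := regex_nfa rB.
have [NS HNS] := regex_nfa (shape_re a b p q).
pose N := nfa_inter (nfa_inter (nfa_inv NA (@piA a b p q)) (nfa_inv NB (@piB a b p q))) NS.
have [r Hr] := nfa_regular N.
exists r => w; split.
  case=> us [vs [ijs [ul [vl [H1 H2 Ew HLA HLB]]]]].
  apply/Hr/Lang_inter; split; first (apply/Lang_inter; split; apply/Lang_inv).
  - apply/HNA/HA; rewrite Ew.
    by have := pmapA_segre ul vl H1 H2; rewrite /F => ->.
  - apply/HNB/HB; rewrite Ew.
    by have := pmapB_segre ul vl H1 H2; rewrite /F => ->.
  - by apply/HNS/shape_ok; exists us, vs, ijs, ul, vl.
move/Hr/Lang_inter => [/Lang_inter [/Lang_inv /HNA /HA HLA /Lang_inv /HNB /HB HLB]].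
move=> /HNS /shape_ok [us [vs [ijs [ul [vl [H1 H2 Ew]]]]]].
exists us, vs, ijs, ul, vl; split => //.
- by move: HLA; rewrite Ew pmapA_segre.
- by move: HLB; rewrite Ew pmapB_segre.
Qed.
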